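(* Let $V$ be an object of $\mathcal{E}_q^{deg}$ and let $$E_V=\prod_{\alpha:A\hookrightarrow V,\ A\in\mathcal{S}_V\setminus\{V\}}(1+e_\alpha)\in\mathbb{F}_2[\mathrm{End}_{\mathrm{Sp}(\mathcal{E}_q^{deg})}(V)],$$ the product over all proper subobjects of $V$. Then (1) $E_V\cdot E_V=E_V$, and (2) $Q_V\cdot E_V\cong iso_V$; in particular $\mathrm{Hom}_{\mathcal{F}_{iso}}(iso_V,F)\cong F(E_V)\cdot F(V)$ for every $F\in\mathcal{F}_{iso}$.
   Context: $\mathcal{E}$: all $\mathbb{F}_2$-vector spaces. $\mathcal{E}_q^{deg}$: objects finite-dimensional quadratic spaces over $\mathbb{F}_2$ (possibly degenerate), morphisms injective linear maps preserving quadratic forms. $\mathrm{Sp}(\mathcal{E}_q^{deg})$: same objects, morphisms spans $[V\leftarrow D\rightarrow W]$ up to iso of $D$, composed by pullback. $\mathcal{F}_{iso}=\mathrm{Func}(\mathrm{Sp}(\mathcal{E}_q^{deg}),\mathcal{E})$. $\mathcal{S}_V$ is the set of subobjects $\alpha:A\hookrightarrow V$ of $V$ in $\mathcal{E}_q^{deg}$ (linear subspaces with restricted form); $\mathcal{S}_V\setminus\{V\}$ the proper ones. $e_\alpha=[V\xleftarrow{\alpha}A\xrightarrow{\alpha}V]$. $Q_V=\mathbb{F}_2[\mathrm{Hom}_{\mathrm{Sp}(\mathcal{E}_q^{deg})}(V,-)]$, and for $e$ in the monoid algebra of $\mathrm{End}(V)$, $Q_V\cdot e$ is the image of $x\mapsto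 x\circ e$ on $Q_V$. The isotropic functor $iso_V$ is the image of $a_V:Q_V\to DQ_V$, where $DF=(-)^*\circ F\circ tr^{op}$, $tr[V\leftarrow X\rightarrow W]=[W\leftarrow X\rightarrow V]$, and $a_V$ corresponds by Yoneda to the linear form on $\mathbb{F}_2[\mathrm{End}(V)]$ equal to $1$ on $\mathrm{Id}_V$ and $0$ on all other basis elements. *)

(* Defs.v *)
From HB Require Import structures.
From mathcomp Require Import all_boot all_order all_algebra.
Set Implicit Arguments. Unset Strict Implicit. Unset Printing Implicit Defensive.
Import GRing.Theory.
Local Open Scope ring_scope.

(* Objects of E_q^deg: finite-dimensional quadratic spaces over F_2.         *)
(* Every f.d. F_2-space is iso to F_2^n, so we take carriers 'rV['F_2]_n.    *)

Definition polar (n : nat) (q : 'rV['F_2]_n -> 'F_2) (x y : 'rV['F_2]_n) : 'F_2 :=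
  q (x + y) - q x - q y.

(* q is a quadratic form: q(0)=0 (i.e. q(lx)=l^2 q(x) over F_2) and its polar
   form is bilinear (additivity = linearity over F_2; symmetry is automatic). *)
Definition is_quadform (n : nat) (q : 'rV['F_2]_n -> 'F_2) : Prop :=
  q 0 = 0 /\ forall x y z, polar q (x + y) z = polar q x z + polar q y z.

Record qspace := QSpace {
  qdim : nat;
  qform : 'rV['F_2]_qdim -> 'F_2;
  qformP : is_quadform qform }.

Notation carrier V := ('rV['F_2]_(qdim V)).

(* Morphisms of Sp(E_q^deg).  A span [V <- D -> W] with injective isometric  *)
(* legs, up to iso of D, is the same as its image in V (+) W: a subspace G   *)
(* of V x W on which both projections are injective and q_V o p1 = q_W o p2. *)
(* Composition by pullback is relational composition.                       *)

Definition is_spmor (V W : qspace) (G : {set carrier V * carrier W}) : bool :=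
  [&& ((0 : carrier V), (0 : carrier W)) \in G,
      [forall x in G, forall y in G, (x.1 + y.1, x.2 + y.2) \in G],
      [forall x in G, forall y in G, (x.1 == y.1) == (x.2 == y.2)]
    & [forall x in G, @qform V x.1 == @qform W x.2]].

Notation spHom V W := {G : {set carrier V * carrier W} | is_spmor G}.

Section SpMor.
Variables V W : qspace.
Implicit Types f : spHom V W.

Lemma spmor0 f : ((0 : carrier V), (0 : carrier W)) \in val f.
Proof. by case: f => G /= /and4P[]. Qed.

Lemma spmorD f x y : x \in val f -> y \in val f -> (x.1 + y.1, x.2 + y.2) \in val f.
Proof.
case: f => G /= /and4P[_ /forall_inP hD _ _] xG yG.
exact: (forall_inP (hD x xG) y yG).
Qed.

Lemma spmor_inj f x y : x \in val f -> y \in val f -> (x.1 == y.1) = (x.2 == y.2).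
Proof.
case: f => G /= /and4P[_ _ /forall_inP hI _] xG yG.
have := forall_inP (hI x xG) y yG; by move/eqP.
Qed.

Lemma spmorq f x : x \in val f -> @qform V x.1 = @qform W x.2.
Proof.
case: f => G /= /and4P[_ _ _ /forall_inP hq] xG.
apply/eqP; exact: hq.
Qed.
End SpMor.

Definition comp_set (U V W : qspace) (g : spHom V W) (f : spHom U V)
  : {set carrier U * carrier W} :=
  [set p | [exists v : carrier V, ((p.1, v) \in val f) && ((v, p.2) \in val g)]].

Lemma comp_spmor (U V W : qspace) (g : spHom V W) (f : spHom U V) :
  is_spmor (comp_set g f).
Proof.
apply/and4P; split.
- by rewrite inE; apply/existsP; exists 0; rewrite /= !spmor0.
- apply/forall_inP => x; rewrite inE => /existsP[v /andP[xf vg]].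
  apply/forall_inP => y; rewrite inE => /existsP[w /andP[yf wg]].
  rewrite inE; apply/existsP; exists (v + w).
  by have /= -> := spmorD xf yf; have /= -> := spmorD vg wg.
- apply/forall_inP => x; rewrite inE => /existsP[v /andP[xf vg]].
  apply/forall_inP => y; rewrite inE => /existsP[w /andP[yf wg]].
  have /= -> := spmor_inj xf yf; have /= -> := spmor_inj vg wg.
  exact: eqxx.
- apply/forall_inP => x; rewrite inE => /existsP[v /andP[xf vg]].
  by have /= -> := spmorq xf; have /= -> := spmorq vg.
Qed.

Definition comp (U V W : qspace) (g : spHom V W) (f : spHom U V) : spHom U W :=
  exist _ (comp_set g f) (comp_spmor g f).

Definition id_set (V : qspace) : {set carrier V * carrier V} :=
  [set p | p.1 == p.2].

Lemma id_spmor (V : qspace) : is_spmor (id_set V).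
Proof.
apply/and4P; split.
- by rewrite inE.
- apply/forall_inP => x; rewrite inE => /eqP e1.
  apply/forall_inP => y; rewrite inE => /eqP e2.
  by rewrite inE /= e1 e2.
- apply/forall_inP => x; rewrite inE => /eqP e1.
  apply/forall_inP => y; rewrite inE => /eqP e2.
  by rewrite e1 e2.
- by apply/forall_inP => x; rewrite inE => /eqP ->.
Qed.

Definition idm (V : qspace) : spHom V V := exist _ (id_set V) (id_spmor V).

Definition tr_set (V W : qspace) (f : spHom V W) : {set carrier W * carrier V} :=
  [set p | (p.2, p.1) \in val f].

Lemma tr_spmor (V W : qspace) (f : spHom V W) : is_spmor (tr_set f).
Proof.
apply/and4P; split.
- by rewrite inE /= spmor0.
- apply/forall_inP => x; rewrite inE => xf.
  apply/forall_inP => y; rewrite inE => yf.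
  by rewrite inE; have /= := spmorD xf yf.
- apply/forall_inP => x; rewrite inE => xf.
  apply/forall_inP => y; rewrite inE => yf.
  by have /= -> := spmor_inj xf yf.
- by apply/forall_inP => x; rewrite inE => xf; have /= -> := spmorq xf.
Qed.

Definition tr (V W : qspace) (f : spHom V W) : spHom W V :=
  exist _ (tr_set f) (tr_spmor f).

(* Subobjects alpha : A >-> V of V in E_q^deg = linear subspaces of V
   (with the restricted form). Over F_2, subspace = contains 0 + closed under +. *)
Definition is_subsp (V : qspace) (A : {set carrier V}) : bool :=
  (0 \in A) && [forall x in A, forall y in A, x + y \in A].

(* e_alpha = [V <-alpha- A -alpha-> V], i.e. the diagonal of A.
   (For a subspace A the set below is a morphism; insubd only supplies a
   default so that the definition is total.) *)
Definition diagm (V : qspace) (A : {set carrier V}) : spHom V V :=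
  insubd (idm V) [set p : carrier V * carrier V | (p.1 == p.2) && (p.1 \in A)].

(* Monoid algebras F_2[Hom(V,W)] and composition extended bilinearly.        *)

Notation Alg V W := {ffun spHom V W -> 'F_2}.

Definition delta (V W : qspace) (g : spHom V W) : Alg V W :=
  [ffun h => (h == g)%:R].

Definition conv (U V W : qspace) (x : Alg V W) (e : Alg U V) : Alg U W :=
  [ffun h => \sum_(g : spHom V W) \sum_(f : spHom U V | comp g f == h) x g * e f].

(* E_V = prod over proper subobjects alpha of (1 + e_alpha) in F_2[End(V)]
   (the factors commute, so the order of the product is irrelevant). *)
Definition EV (V : qspace) : Alg V V :=
  \big[@conv V V V / delta (idm V)]_(A : {set carrier V} | is_subsp A && (A != setT))
     (delta (idm V) + delta (diagm A)).

(* Q_V(W) = F_2[Hom(V,W)],  Q_V(g) x = g o x. *)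
Definition Qmap (V W W' : qspace) (g : spHom W W') (x : Alg V W) : Alg V W' :=
  conv (delta g) x.

(* (Q_V . e)(W) = image of x |-> x o e. *)
Definition QE (V W : qspace) (e : Alg V V) : {set Alg V W} :=
  [set conv x e | x : Alg V W].

(* DQ_V(W) = Q_V(W)^*, identified with functions Hom(V,W) -> F_2 (linear forms
   on the finite basis).  DQ_V(g) = Q_V(tr g)^*. *)
Definition DQmap (V W W' : qspace) (g : spHom W W') (phi : Alg V W) : Alg V W' :=
  [ffun b => phi (comp (tr g) b)].

(* a_V : Q_V -> DQ_V, the Yoneda image of the linear form delta_{Id_V}:
   a_V(W)(x)(b) = sum_g x(g) * [tr g o b = Id_V]. *)
Definition aV (V W : qspace) (x : Alg V W) : Alg V W :=
  [ffun b => \sum_(g : spHom V W) x g * (comp (tr g) b == idm V)%:R].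

Definition isoV (V W : qspace) : {set Alg V W} := [set aV x | x : Alg V W].

(* Objects of F_iso: functors Sp(E_q^deg) -> F_2-vector spaces.             *)

Record spFunctor := SpFunctor {
  Fob : qspace -> lmodType 'F_2;
  Fmor : forall V W : qspace, spHom V W -> Fob V -> Fob W;
  Fmor_linear : forall V W (g : spHom V W) (a : 'F_2) (x y : Fob V),
      Fmor g (a *: x + y) = a *: Fmor g x + Fmor g y;
  Fmor_id : forall V (x : Fob V), Fmor (idm V) x = x;
  Fmor_comp : forall U V W (f : spHom U V) (g : spHom V W) (x : Fob U),
      Fmor (comp g f) x = Fmor g (Fmor f x) }.

Definition Fact (F : spFunctor) (V : qspace) (e : Alg V V) (y : Fob F V) : Fob F V :=
  \sum_(f : spHom V V) e f *: @Fmor F _ _ f y.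

Definition Fimage (F : spFunctor) (V : qspace) (e : Alg V V) (y : Fob F V) : Prop :=
  exists z, y = Fact e z.

(* A natural transformation iso_V -> F (linearity over F_2 = additivity), given by families of maps defined on
   the ambient DQ_V(W) of which only the restriction to iso_V(W) matters. *)
Definition is_nat_from_iso (V : qspace) (F : spFunctor)
    (eta : forall W : qspace, Alg V W -> Fob F W) : Prop :=
  (forall W (x y : Alg V W), x \in isoV V W -> y \in isoV V W ->
      eta W (x + y) = eta W x + eta W y) /\
  (forall W W' (g : spHom W W') (x : Alg V W), x \in isoV V W ->
      eta W' (DQmap g x) = @Fmor F _ _ g (eta W x)).

(* Main.v *)
Require Import Defs.
From HB Require Import structures.
From mathcomp Require Import all_boot all_order all_algebra ring.
Set Implicit Arguments. Unset Strict Implicit. Unset Printing Implicit Defensive.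
Import GRing.Theory.
Local Open Scope ring_scope.
Local Notation comp := Defs.comp.
Local Notation tr := Defs.tr.
Local Notation delta := Defs.delta.


Lemma spE (V W : qspace) (f g : spHom V W) : (forall p, (p \in val f) = (p \in val g)) -> f = g.
Proof. by move=> h; apply/val_inj/setP => p; exact: h. Qed.

Lemma compE (U V W : qspace) (g : spHom V W) (f : spHom U V) p :
  (p \in val (comp g f)) = [exists v, ((p.1, v) \in val f) && ((v, p.2) \in val g)].
Proof. by rewrite inE. Qed.

Lemma spcompA (U V W X : qspace) (h : spHom W X) (g : spHom V W) (f : spHom U V) :
  comp h (comp g f) = comp (comp h g) f.
Proof.
apply: spE => [[u x]]; rewrite !compE /=; apply/existsP/existsP.
- case=> v /andP[]; rewrite compE => /existsP[w /andP[uw wv]] vx.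
  exists w; rewrite uw compE /=; apply/existsP; exists v; by rewrite wv.
- case=> w /andP[uw]; rewrite compE => /existsP[v /andP[wv vx]].
  exists v; rewrite vx compE andbT; apply/existsP; exists w; by rewrite uw.
Qed.

Lemma spcomp1 (V W : qspace) (g : spHom V W) : comp g (idm V) = g.
Proof.
apply: spE => [[u w]]; rewrite compE /=; apply/existsP/idP.
- by case=> v /andP[]; rewrite inE /= => /eqP ->.
- by move=> h; exists u; rewrite inE /= eqxx.
Qed.

Lemma spcomp1l (V W : qspace) (g : spHom V W) : comp (idm W) g = g.
Proof.
apply: spE => [[u w]]; rewrite compE /=; apply/existsP/idP.
- by case=> v /andP[h]; rewrite inE /= => /eqP <-.
- by move=> h; exists w; rewrite inE /= eqxx andbT.
Qed.

Lemma trE (V W : qspace) (f : spHom V W) p : (p \in val (tr f)) = ((p.2, p.1) \in val f).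
Proof. by rewrite inE. Qed.

Lemma tr_comp (U V W : qspace) (g : spHom V W) (f : spHom U V) :
  tr (comp g f) = comp (tr f) (tr g).
Proof.
apply: spE => [[w u]]; rewrite trE !compE /=; apply/existsP/existsP.
- by case=> v /andP[a b]; exists v; rewrite !trE /= a b.
- by case=> v; rewrite !trE /= => /andP[a b]; exists v; rewrite a b.
Qed.

Lemma subsp_diag (V : qspace) (A : {set carrier V}) : is_subsp A ->
  is_spmor [set p : carrier V * carrier V | (p.1 == p.2) && (p.1 \in A)].
Proof.
case/andP=> A0 /forall_inP AD.
apply/and4P; split.
- by rewrite inE /= eqxx A0.
- apply/forall_inP => x; rewrite inE => /andP[/eqP e1 xA].
  apply/forall_inP => y; rewrite inE => /andP[/eqP e2 yA].
  by rewrite inE /= e1 e2 eqxx /= -e1 -e2 (forall_inP (AD _ xA)).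
- apply/forall_inP => x; rewrite inE => /andP[/eqP e1 xA].
  apply/forall_inP => y; rewrite inE => /andP[/eqP e2 yA].
  by rewrite e1 e2.
- by apply/forall_inP => x; rewrite inE => /andP[/eqP -> _].
Qed.

Lemma diagE (V : qspace) (A : {set carrier V}) p : is_subsp A ->
  (p \in val (diagm A)) = (p.1 == p.2) && (p.1 \in A).
Proof. by move=> sA; rewrite /diagm insubdK ?inE //; exact: subsp_diag. Qed.

Lemma subspI (V : qspace) (A B : {set carrier V}) : is_subsp A -> is_subsp B -> is_subsp (A :&: B).
Proof.
case/andP=> A0 /forall_inP AD; case/andP=> B0 /forall_inP BD.
apply/andP; split; first by rewrite inE A0 B0.
apply/forall_inP => x; rewrite inE => /andP[xA xB].
apply/forall_inP => y; rewrite inE => /andP[yA yB].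
by rewrite inE (forall_inP (AD _ xA)) ?(forall_inP (BD _ xB)).
Qed.

Lemma subspT (V : qspace) : is_subsp [set: carrier V].
Proof. rewrite /is_subsp inE /=; apply/forall_inP => x _; apply/forall_inP => y _; by rewrite inE. Qed.

Lemma diagI (V : qspace) (A B : {set carrier V}) : is_subsp A -> is_subsp B ->
  comp (diagm A) (diagm B) = diagm (A :&: B).
Proof.
move=> sA sB; apply: spE => [[u w]]; rewrite compE diagE ?subspI //= inE.
apply/existsP/idP.
- case=> v /andP[]; rewrite !diagE //= => /andP[/eqP <- uB] /andP[/eqP <- uA].
  by rewrite eqxx uA uB.
- case/andP=> /eqP <- /andP[uA uB]; exists u; by rewrite !diagE //= eqxx uA uB.
Qed.

Lemma diagT (V : qspace) : diagm [set: carrier V] = idm V.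
Proof. apply: spE => p; rewrite diagE ?subspT // in_setT andbT inE //. Qed.

Definition domset (V W : qspace) (g : spHom V W) : {set carrier V} :=
  [set v | [exists w, (v, w) \in val g]].

Lemma domset_subsp (V W : qspace) (g : spHom V W) : is_subsp (domset g).
Proof.
apply/andP; split; first by rewrite inE; apply/existsP; exists 0; exact: spmor0.
apply/forall_inP => x; rewrite inE => /existsP[w xw].
apply/forall_inP => y; rewrite inE => /existsP[w' yw].
rewrite inE; apply/existsP; exists (w + w'); exact: (spmorD xw yw).
Qed.

Lemma comp_dom (V W : qspace) (g : spHom V W) : comp g (diagm (domset g)) = g.
Proof.
apply: spE => [[u w]]; rewrite compE /=; apply/existsP/idP.
- by case=> v /andP[]; rewrite diagE ?domset_subsp //= => /andP[/eqP ->].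
- move=> h; exists u; rewrite diagE ?domset_subsp //= eqxx h inE andbT.
  by apply/existsP; exists w.
Qed.

Lemma domset_diag (V : qspace) (A : {set carrier V}) : is_subsp A -> domset (diagm A) = A.
Proof.
move=> sA; apply/setP => v; rewrite inE; apply/existsP/idP.
- by case=> w; rewrite diagE //= => /andP[].
- by move=> vA; exists v; rewrite diagE //= eqxx.
Qed.

Lemma domset_comp (U V W : qspace) (g : spHom V W) (f : spHom U V) :
  domset (comp g f) \subset domset f.
Proof.
apply/subsetP => u; rewrite !inE => /existsP[w]; rewrite compE => /existsP[v /andP[uv _]].
by apply/existsP; exists v.
Qed.

Definition stotal (V W : qspace) (g : spHom V W) := domset g == setT.

Lemma trcomp_id (V W : qspace) (g b : spHom V W) :
  (comp (tr g) b == idm V) = (g == b) && stotal b.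
Proof.
apply/eqP/andP.
- move=> h.
  have key : forall u, exists w, ((u, w) \in val b) && ((u, w) \in val g).
    move=> u; have : (u, u) \in val (idm V) by rewrite inE.
    rewrite -h compE => /existsP[w /andP[a]]; rewrite trE /= => c.
    by exists w; rewrite a c.
  split; last first.
    apply/eqP/setP => u; rewrite !inE; case: (key u) => w /andP[a _].
    by apply/existsP; exists w.
  apply/eqP/spE => [[u w]] /=; apply/idP/idP => hh.
  + case: (key u) => w' /andP[a c].
    first [have := spmor_inj hh c | have := spmor_inj hh a];
    rewrite /= eqxx => /esym/eqP ->; done.
  + case: (key u) => w' /andP[a c].
    first [have := spmor_inj hh c | have := spmor_inj hh a];
    rewrite /= eqxx => /esym/eqP ->; done.
- case=> /eqP <- /eqP tg; apply: spE => [[u u']]; rewrite compE inE /=.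
  apply/existsP/idP.
  + case=> w /andP[a]; rewrite trE /= => c.
    by rewrite (spmor_inj a c) eqxx.
  + move=> /eqP <-; have : u \in domset g by rewrite tg inE.
    rewrite inE => /existsP[w a]; exists w; by rewrite inE /= a.
Qed.


Lemma ind_if (b : bool) (a : 'F_2) : b%:R * a = if b then a else 0.
Proof. by case: b; rewrite ?mul1r ?mul0r. Qed.

Lemma collapse (U V W : qspace) (G : spHom V W -> spHom U V -> spHom U W -> 'F_2) :
  \sum_h \sum_g \sum_f (comp g f == h)%:R * G g f h = \sum_g \sum_f G g f (comp g f).
Proof.
rewrite exchange_big /=; apply: eq_bigr => g _.
rewrite exchange_big /=; apply: eq_bigr => f _.
under eq_bigr do rewrite ind_if.
by rewrite -big_mkcond /= (big_pred1 (comp g f)) // => h; rewrite /= eq_sym.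
Qed.

Lemma convE (U V W : qspace) (x : Alg V W) (e : Alg U V) h :
  conv x e h = \sum_g \sum_f (comp g f == h)%:R * (x g * e f).
Proof.
rewrite ffunE; apply: eq_bigr => g _; rewrite big_mkcond; apply: eq_bigr => f _.
by rewrite ind_if.
Qed.

Lemma conv_assoc (U V W X : qspace) (x : Alg W X) (y : Alg V W) (z : Alg U V) :
  conv (conv x y) z = conv x (conv y z).
Proof.
apply/ffunP => h; rewrite !convE.
have -> : \sum_g2 \sum_f (comp g2 f == h)%:R * (conv x y g2 * z f) =
  \sum_g2 \sum_g \sum_f1 (comp g f1 == g2)%:R *
      \sum_f ((comp g2 f == h)%:R * (x g * y f1 * z f)).
  apply: eq_bigr => g2 _; rewrite convE.
  under eq_bigr => f _ do rewrite mulr_suml mulr_sumr.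
  rewrite exchange_big /=; apply: eq_bigr => g _.
  under eq_bigr => f _ do rewrite mulr_suml mulr_sumr.
  rewrite exchange_big /=; apply: eq_bigr => f1 _.
  rewrite mulr_sumr; apply: eq_bigr => f _; ring.
rewrite collapse; apply: eq_bigr => g _.
have -> : \sum_f (comp g f == h)%:R * (x g * conv y z f) =
  \sum_f' \sum_a \sum_b (comp a b == f')%:R *
        ((comp g (comp a b) == h)%:R * (x g * (y a * z b))).
  apply: eq_bigr => f' _; rewrite convE.
  rewrite !mulr_sumr; apply: eq_bigr => a _; rewrite !mulr_sumr; apply: eq_bigr => b _.
  case: (eqVneq (comp a b) f') => [->|]; rewrite ?mul0r ?mul1r ?mulr0 //; ring.
rewrite collapse; apply: eq_bigr => f1 _.
apply: eq_bigr => f _; rewrite spcompA; ring.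
Qed.

Lemma convD_l (U V W : qspace) (x y : Alg V W) (e : Alg U V) :
  conv (x + y) e = conv x e + conv y e.
Proof.
apply/ffunP => h; rewrite [in RHS]ffunE !convE -big_split; apply: eq_bigr => g _.
rewrite -big_split; apply: eq_bigr => f _; by rewrite ffunE !(mulrDl, mulrDr).
Qed.

Lemma convD_r (U V W : qspace) (x : Alg V W) (e e' : Alg U V) :
  conv x (e + e') = conv x e + conv x e'.
Proof.
apply/ffunP => h; rewrite [in RHS]ffunE !convE -big_split; apply: eq_bigr => g _.
rewrite -big_split; apply: eq_bigr => f _; by rewrite ffunE !(mulrDl, mulrDr).
Qed.

Lemma conv0_r (U V W : qspace) (x : Alg V W) : conv x (0 : Alg U V) = 0.
Proof.
apply/ffunP => h; rewrite [in RHS]ffunE convE big1 // => g _; rewrite big1 // => f _.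
by rewrite ffunE mulr0 mulr0.
Qed.

Definition scal (V W : qspace) (c : 'F_2) (x : Alg V W) : Alg V W := [ffun h => c * x h].

Lemma convZ_l (U V W : qspace) (c : 'F_2) (x : Alg V W) (e : Alg U V) :
  conv (scal c x) e = scal c (conv x e).
Proof.
apply/ffunP => h; rewrite [in RHS]ffunE !convE mulr_sumr; apply: eq_bigr => g _.
rewrite mulr_sumr; apply: eq_bigr => f _; rewrite ffunE; ring.
Qed.

Lemma conv_delta_l (U V W : qspace) (g : spHom V W) (e : Alg U V) h :
  conv (delta g) e h = \sum_f (comp g f == h)%:R * e f.
Proof.
rewrite convE (bigD1 g) //= [X in _ + X]big1 ?addr0; last first.
  move=> g' ng; apply: big1 => f _; by rewrite ffunE (negbTE ng) mul0r mulr0.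
by apply: eq_bigr => f _; rewrite ffunE eqxx mul1r.
Qed.

Lemma conv_delta_delta (U V W : qspace) (g : spHom V W) (f : spHom U V) :
  conv (delta g) (delta f) = delta (comp g f).
Proof.
apply/ffunP => h; rewrite conv_delta_l (bigD1 f) //= [X in _ + X]big1 ?addr0; last first.
  by move=> f' nf; rewrite ffunE (negbTE nf) mulr0.
by rewrite !ffunE eqxx mulr1 eq_sym.
Qed.

Lemma conv1l (V W : qspace) (e : Alg V W) : conv (delta (idm W)) e = e.
Proof.
apply/ffunP => h; rewrite conv_delta_l (bigD1 h) //= [X in _ + X]big1 ?addr0; last first.
  by move=> f nf; rewrite spcomp1l (negbTE nf) mul0r.
by rewrite spcomp1l eqxx mul1r.
Qed.

Lemma alg_decomp (V W : qspace) (x : Alg V W) : x = \sum_g scal (x g) (delta g).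
Proof.
apply/ffunP => h; rewrite sum_ffunE (bigD1 h) //= [X in _ + X]big1 ?addr0; last first.
  by move=> g ng; rewrite !ffunE eq_sym (negbTE ng) mulr0.
by rewrite !ffunE eqxx mulr1.
Qed.

Lemma conv_sum_l (U V W : qspace) (I : finType) (c : I -> 'F_2) (a : I -> Alg V W) (e : Alg U V) :
  conv (\sum_i scal (c i) (a i)) e = \sum_i scal (c i) (conv (a i) e).
Proof.
apply: (big_rec2 (fun s t => conv s e = t)).
  by apply/ffunP => h; rewrite convE !ffunE big1 // => g _; rewrite big1 // => f _; rewrite ffunE mul0r mulr0.
by move=> i s t _ <-; rewrite convD_l convZ_l.
Qed.

Lemma conv_decomp (U V W : qspace) (x : Alg V W) (e : Alg U V) :
  conv x e = \sum_g scal (x g) (conv (delta g) e).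
Proof. by rewrite {1}(alg_decomp x) conv_sum_l. Qed.


Lemma F2addxx (x : 'F_2) : x + x = 0.
Proof. by case: x => [[|[|]]] //= ?; apply/val_inj. Qed.

Lemma F2_cases (x : 'F_2) : x = 0 \/ x = 1.
Proof. by case: x => [[|[|]]] //= ?; [left|right]; apply/val_inj. Qed.

Lemma AlgAddxx (V W : qspace) (x : Alg V W) : x + x = 0.
Proof. by apply/ffunP => h; rewrite !ffunE F2addxx. Qed.

Lemma conv_delta_r (U V W : qspace) (x : Alg V W) (f : spHom U V) h :
  conv x (delta f) h = \sum_g (comp g f == h)%:R * x g.
Proof.
rewrite convE; apply: eq_bigr => g _.
rewrite (bigD1 f) //= [X in _ + X]big1 ?addr0; last first.
  by move=> f' nf; rewrite ffunE (negbTE nf) !mulr0.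
by rewrite ffunE eqxx mulr1.
Qed.

Lemma conv1r (V W : qspace) (e : Alg V W) : conv e (delta (idm V)) = e.
Proof.
apply/ffunP => h; rewrite conv_delta_r (bigD1 h) //= [X in _ + X]big1 ?addr0; last first.
  by move=> f nf; rewrite spcomp1 (negbTE nf) mul0r.
by rewrite spcomp1 eqxx mul1r.
Qed.

Lemma conv0_l (U V W : qspace) (e : Alg U V) : conv (0 : Alg V W) e = 0.
Proof.
apply/ffunP => h; rewrite [in RHS]ffunE convE big1 // => g _; rewrite big1 // => f _.
by rewrite ffunE mul0r mulr0.
Qed.

Lemma sum_neq0 (I : finType) (F : I -> 'F_2) : \sum_i F i != 0 -> exists i, F i != 0.
Proof.
move=> h; apply/existsP; apply: contraR h => /existsPn hn.
by apply/eqP/big1 => i _; apply/eqP; have := hn i; rewrite negbK.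
Qed.

Lemma delta_neq0 (V W : qspace) (g h : spHom V W) : delta g h != 0 -> h = g.
Proof. rewrite ffunE; by case: (h =P g) => // _; rewrite eqxx. Qed.

Lemma addfE (V W : qspace) (x y : Alg V W) h : (x + y) h = x h + y h.
Proof. by rewrite ffunE. Qed.

Definition dlt_def (V W : qspace) (g : spHom V W) : Alg V W := delta g.
Fact dlt_key : unit. Proof. exact: tt. Qed.
Definition dlt := locked_with dlt_key dlt_def.
Lemma dltE : dlt = dlt_def. Proof. exact: unlock. Qed.
Lemma dlt_app (V W : qspace) (g h : spHom V W) : dlt g h = (h == g)%:R.
Proof. by rewrite dltE ffunE. Qed.
Lemma conv_dlt_l (U V W : qspace) (g : spHom V W) (e : Alg U V) h :
  conv (dlt g) e h = \sum_f (comp g f == h)%:R * e f.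
Proof. rewrite dltE; exact: conv_delta_l. Qed.
Lemma conv_dlt_r (U V W : qspace) (x : Alg V W) (f : spHom U V) h :
  conv x (dlt f) h = \sum_g (comp g f == h)%:R * x g.
Proof. rewrite dltE; exact: conv_delta_r. Qed.
Lemma conv_dlt_dlt (U V W : qspace) (g : spHom V W) (f : spHom U V) :
  conv (dlt g) (dlt f) = dlt (comp g f).
Proof. rewrite dltE; exact: conv_delta_delta. Qed.
Lemma conv1l' (V W : qspace) (e : Alg V W) : conv (dlt (idm W)) e = e.
Proof. rewrite dltE; exact: conv1l. Qed.
Lemma conv1r' (V W : qspace) (e : Alg V W) : conv e (dlt (idm V)) = e.
Proof. rewrite dltE; exact: conv1r. Qed.
Lemma dlt_neq0 (V W : qspace) (g h : spHom V W) : dlt g h != 0 -> h = g.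
Proof. rewrite dltE; exact: delta_neq0. Qed.
Lemma conv_decomp' (U V W : qspace) (x : Alg V W) (e : Alg U V) :
  conv x e = \sum_g scal (x g) (conv (dlt g) e).
Proof. rewrite dltE; exact: conv_decomp. Qed.

Definition pr (V : qspace) (A : {set carrier V}) := is_subsp A && (A != setT).

Lemma diag_idm (V : qspace) (D : {set carrier V}) : is_subsp D -> diagm D = idm V -> D = setT.
Proof.
move=> sD e; rewrite -(domset_diag sD) e; apply/setP => v; rewrite !inE.
by apply/existsP; exists v; rewrite inE.
Qed.

Lemma idm_diag (V : qspace) : exists C, is_subsp C /\ idm V = diagm C.
Proof. by exists setT; rewrite diagT; split => //; exact: subspT. Qed.

Definition einv (V : qspace) (r : seq {set carrier V}) (X : Alg V V) :=
  (forall B, is_subsp B -> conv (dlt (diagm B)) X = conv X (dlt (diagm B))) /\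
  X (idm V) = 1 /\
  (forall f, X f != 0 -> exists C, is_subsp C /\ f = diagm C) /\
  (forall B, B \in r -> pr B -> conv (dlt (diagm B)) X = 0).

Lemma inv_step (V : qspace) (A : {set carrier V}) r (X Y : Alg V V) :
  pr A -> Y = X + conv (dlt (diagm A)) X -> einv r X -> einv (A :: r) Y.
Proof.
move=> prA -> [comm [one [supp ann]]].
have sA : is_subsp A by case/andP: prA.
have commA : forall B, is_subsp B ->
    conv (dlt (diagm B)) (conv (dlt (diagm A)) X) = conv (dlt (diagm A)) (conv (dlt (diagm B)) X).
  move=> B sB.
  rewrite -(conv_assoc (dlt (diagm B))) -(conv_assoc (dlt (diagm A))).
  by rewrite !conv_dlt_dlt !diagI // setIC.
split.
  move=> B sB; rewrite convD_r convD_l (comm B sB) (commA B sB) (comm B sB).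
  by rewrite -conv_assoc.
split.
  rewrite addfE one conv_dlt_l big1 ?addr0 // => f _.
  have [->|nz] := eqVneq (X f) 0; first by rewrite mulr0.
  case: (supp f nz) => C [sC ->]; rewrite diagI //.
  case: eqP => [/diag_idm|]; last by rewrite mul0r.
  move=> /(_ (subspI sA sC)) e; exfalso; move/andP: prA => [_ /eqP]; apply.
  by apply/setP => v; move/setP: e => /(_ v); rewrite !inE => /andP[].
split.
  move=> f; rewrite addfE; have [nz _|z] := boolP (X f != 0); first exact: supp.
  rewrite negbK in z; rewrite (eqP z) add0r conv_dlt_l => /sum_neq0 [f' nz].
  have nX : X f' != 0 by apply: contraNneq nz => ->; rewrite mulr0.
  case: (supp f' nX) => C [sC ef]; move: nz; rewrite ef diagI //.
  case: (diagm (A :&: C) =P f) => [<- _|_]; last by rewrite mul0r eqxx.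
  by exists (A :&: C); split => //; exact: subspI.
move=> B; rewrite in_cons => /orP[/eqP ->|Br] prB.
  rewrite convD_r -conv_assoc conv_dlt_dlt diagI // setIid; exact: AlgAddxx.
have sB : is_subsp B by case/andP: prB.
by rewrite convD_r commA // ann // conv0_r addr0.
Qed.

Lemma EV_list (V : qspace) (r : seq {set carrier V}) :
  einv r (\big[@conv V V V/dlt (idm V)]_(A <- r | pr A) (dlt (idm V) + dlt (diagm A))).
Proof.
elim: r => [|A r IH].
  rewrite big_nil; split; first by move=> B _; rewrite conv1l' conv1r'.
  split; first by rewrite dlt_app eqxx.
  split => // f /dlt_neq0 ->; exact: idm_diag.
rewrite big_cons.
move: IH; set X := \big[_/_]_(_ <- r | _) _; clearbody X => IH.
case prA: (pr A); last first.
  case: IH => comm [one [supp ann]].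
  split; first exact: comm. split; first exact: one. split; first exact: supp.
  move=> B; rewrite in_cons; case/orP => [/eqP ->|]; last exact: ann.
  by rewrite prA.
apply: inv_step IH => //.
by rewrite convD_l conv1l'.
Qed.


Definition EVd (V : qspace) : Alg V V :=
  \big[@conv V V V/dlt (idm V)]_(A | pr A) (dlt (idm V) + dlt (diagm A)).

Lemma EV_EVd V : EV V = EVd V.
Proof. by rewrite /EVd dltE. Qed.

Lemma EV_inv V : einv (index_enum _) (EVd V).
Proof. exact: EV_list. Qed.

Lemma scalE (V W : qspace) c (x : Alg V W) h : scal c x h = c * x h.
Proof. by rewrite ffunE. Qed.
Lemma scal0 (V W : qspace) (x : Alg V W) : scal 0 x = 0.
Proof. by apply/ffunP => h; rewrite !ffunE mul0r. Qed.
Lemma scal1 (V W : qspace) (x : Alg V W) : scal 1 x = x.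
Proof. by apply/ffunP => h; rewrite !ffunE mul1r. Qed.
Lemma scalx0 (V W : qspace) c : scal c (0 : Alg V W) = 0.
Proof. by apply/ffunP => h; rewrite !ffunE mulr0. Qed.

Lemma EV_kill (V W : qspace) (g : spHom V W) : ~~ stotal g -> conv (dlt g) (EVd V) = 0.
Proof.
move=> nt; have [_ [_ [_ ann]]] := EV_inv V.
have e : dlt g = conv (dlt g) (dlt (diagm (domset g))) by rewrite conv_dlt_dlt comp_dom.
rewrite e conv_assoc ann ?conv0_r ?mem_index_enum //.
by rewrite /pr domset_subsp.
Qed.

Lemma diag_total (V : qspace) (C : {set carrier V}) : is_subsp C -> stotal (diagm C) -> C = setT.
Proof. by move=> sC; rewrite /stotal domset_diag // => /eqP. Qed.

Lemma EV_supp (V : qspace) (f : spHom V V) : f != idm V -> EVd V f != 0 -> ~~ stotal f.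
Proof.
move=> nf nz; have [_ [_ [supp _]]] := EV_inv V.
case: (supp f nz) => C [sC ef]; apply/negP => tf.
move: nf; rewrite ef (diag_total sC) ?diagT ?eqxx //.
by rewrite -ef.
Qed.

Lemma EV_idem V : conv (EVd V) (EVd V) = EVd V.
Proof.
have [_ [one _]] := EV_inv V.
rewrite conv_decomp' (bigD1 (idm V)) //= one conv1l' scal1 big1 ?addr0 // => f nf.
have [->|nz] := eqVneq (EVd V f) 0; first exact: scal0.
by rewrite EV_kill ?scalx0 // EV_supp.
Qed.

Lemma domset_total (U V W : qspace) (g : spHom V W) (f : spHom U V) :
  stotal (comp g f) -> stotal f.
Proof.
rewrite /stotal => /eqP t; rewrite eqEsubset subsetT /= -t; exact: domset_comp.
Qed.

Lemma EV_total (V W : qspace) (x : Alg V W) (b : spHom V W) : stotal b ->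
  conv x (EVd V) b = x b.
Proof.
move=> tb; have [_ [one _]] := EV_inv V.
rewrite convE (bigD1 b) //= [X in _ + X]big1 ?addr0; last first.
  move=> g ng; apply: big1 => f _.
  have [->|nf] := eqVneq f (idm V); first by rewrite spcomp1 (negbTE ng) mul0r.
  have [->|nz] := eqVneq (EVd V f) 0; first by rewrite !mulr0.
  case: (comp g f =P b) => [e|]; last by rewrite mul0r.
  by move: (EV_supp nf nz); rewrite (@domset_total _ _ _ g f) // e.
rewrite (bigD1 (idm V)) //= [X in _ + X]big1 ?addr0; last first.
  move=> f nf.
  have [->|nz] := eqVneq (EVd V f) 0; first by rewrite !mulr0.
  case: (comp b f =P b) => [e|]; last by rewrite mul0r.
  by move: (EV_supp nf nz); rewrite (domset_total (g := b)) // e.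
by rewrite spcomp1 eqxx one mul1r mulr1.
Qed.

Lemma aV_char (V W : qspace) (x : Alg V W) b : aV x b = (stotal b)%:R * x b.
Proof.
rewrite ffunE (bigD1 b) //= [X in _ + X]big1 ?addr0; last first.
  by move=> g ng; rewrite trcomp_id (negbTE ng) mulr0.
by rewrite trcomp_id eqxx /= mulrC.
Qed.

Lemma aV_EV (V W : qspace) (x : Alg V W) : aV (conv x (EVd V)) = aV x.
Proof.
apply/ffunP => b; rewrite !aV_char; case tb: (stotal b); last by rewrite !mul0r.
by rewrite EV_total.
Qed.

Lemma aV_add (V W : qspace) (x y : Alg V W) : aV (x + y) = aV x + aV y.
Proof. by apply/ffunP => b; rewrite addfE !aV_char addfE mulrDr. Qed.

Lemma aV_scal (V W : qspace) c (x : Alg V W) : aV (scal c x) = scal c (aV x).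
Proof. by apply/ffunP => b; rewrite aV_char !scalE aV_char; ring. Qed.

Lemma aV_nat (V W W' : qspace) (g : spHom W W') (x : Alg V W) :
  aV (Qmap g x) = DQmap g (aV x).
Proof.
apply/ffunP => b; rewrite /Qmap /DQmap [in RHS]ffunE !ffunE.
have -> : \sum_h (conv (delta g) x) h * (comp (tr h) b == idm V)%:R =
    \sum_h \sum_f (comp g f == h)%:R * (x f * (comp (tr h) b == idm V)%:R).
  apply: eq_bigr => h _; rewrite conv_delta_l mulr_suml; apply: eq_bigr => f _; ring.
rewrite exchange_big /=; apply: eq_bigr => f _.
under eq_bigr do rewrite ind_if.
rewrite -big_mkcond /= (big_pred1 (comp g f)); last by move=> h; rewrite /= eq_sym.
by rewrite tr_comp spcompA.
Qed.


Lemma isoVP (V W : qspace) (y : Alg V W) : reflect (exists x, y = aV x) (y \in isoV V W).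
Proof.
apply: (iffP imsetP) => [[x _ ->]|[x ->]]; first by exists x.
by exists x.
Qed.

Lemma QEP (V W : qspace) (e : Alg V V) (y : Alg V W) : reflect (exists x, y = conv x e) (y \in QE W e).
Proof.
apply: (iffP imsetP) => [[x _ ->]|[x ->]]; first by exists x.
by exists x.
Qed.

Lemma Qmap_dlt (V W W' : qspace) (g : spHom W W') (x : Alg V W) : Qmap g x = conv (dlt g) x.
Proof. by rewrite dltE. Qed.

Lemma aV0 (V W : qspace) : aV (0 : Alg V W) = 0.
Proof. by apply/ffunP => b; rewrite aV_char !ffunE mulr0. Qed.

Lemma alg_decomp' (V W : qspace) (x : Alg V W) : x = \sum_g scal (x g) (dlt g).
Proof. rewrite dltE; exact: alg_decomp. Qed.

Lemma aV_sum (V W : qspace) (I : finType) (c : I -> 'F_2) (a : I -> Alg V W) :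
  aV (\sum_i scal (c i) (a i)) = \sum_i scal (c i) (aV (a i)).
Proof.
apply: (big_rec2 (fun s t => aV s = t)); first exact: aV0.
by move=> i s t _ <-; rewrite aV_add aV_scal.
Qed.

Lemma conv_EV_decomp (V W : qspace) (x : Alg V W) :
  conv x (EVd V) = \sum_g scal (aV x g) (conv (dlt g) (EVd V)).
Proof.
rewrite conv_decomp'; apply: eq_bigr => g _; rewrite aV_char.
case tg: (stotal g); first by rewrite mul1r.
by rewrite EV_kill ?tg // !scalx0.
Qed.

Section Fun.
Variable F : spFunctor.

Lemma Fmor0 (V W : qspace) (g : spHom V W) : @Fmor F _ _ g 0 = 0.
Proof.
have h := @Fmor_linear F _ _ g 1 0 0; rewrite !scale1r addr0 in h.
by apply: (addrI (@Fmor F _ _ g 0)); rewrite addr0 -h.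
Qed.

Lemma FmorD (V W : qspace) (g : spHom V W) x y : @Fmor F _ _ g (x + y) = @Fmor F _ _ g x + @Fmor F _ _ g y.
Proof. by have := @Fmor_linear F _ _ g 1 x y; rewrite !scale1r. Qed.

Lemma FmorZ (V W : qspace) (g : spHom V W) a x : @Fmor F _ _ g (a *: x) = a *: @Fmor F _ _ g x.
Proof. by have := @Fmor_linear F _ _ g a x 0; rewrite !addr0 Fmor0 addr0. Qed.

Lemma Fmor_sum (V W : qspace) (g : spHom V W) (I : finType) (c : I -> 'F_2) (v : I -> Fob F V) :
  @Fmor F _ _ g (\sum_i c i *: v i) = \sum_i c i *: @Fmor F _ _ g (v i).
Proof.
apply: (big_rec2 (fun s t => @Fmor F _ _ g s = t)); first exact: Fmor0.
by move=> i s t _ <-; rewrite FmorD FmorZ.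
Qed.

Definition Fx (U W : qspace) (y : Fob F U) (x : Alg U W) : Fob F W :=
  \sum_g x g *: @Fmor F _ _ g y.

Lemma collapseM (U V W : qspace) (G : spHom V W -> spHom U V -> spHom U W -> Fob F W) :
  \sum_h \sum_g \sum_f ((comp g f == h)%:R *: G g f h) = \sum_g \sum_f G g f (comp g f).
Proof.
rewrite exchange_big /=; apply: eq_bigr => g _.
rewrite exchange_big /=; apply: eq_bigr => f _.
have e : forall h, (comp g f == h)%:R *: G g f h = if comp g f == h then G g f h else 0.
  by move=> h; case: (_ == _); rewrite ?scale1r ?scale0r.
under eq_bigr do rewrite e.
by rewrite -big_mkcond /= (big_pred1 (comp g f)) // => h; rewrite /= eq_sym.
Qed.

Lemma FxC (U V W : qspace) (y : Fob F U) (x : Alg V W) (e : Alg U V) :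
  Fx y (conv x e) = Fx (Fx y e) x.
Proof.
rewrite /Fx.
have -> : \sum_h conv x e h *: @Fmor F _ _ h y =
   \sum_h \sum_g \sum_f ((comp g f == h)%:R *: ((x g * e f) *: @Fmor F _ _ h y)).
  apply: eq_bigr => h _; rewrite convE scaler_suml; apply: eq_bigr => g _.
  by rewrite scaler_suml; apply: eq_bigr => f _; rewrite scalerA.
rewrite collapseM; apply: eq_bigr => g _.
rewrite Fmor_sum scaler_sumr; apply: eq_bigr => f _.
by rewrite scalerA Fmor_comp.
Qed.

Lemma Fx_dlt (U W : qspace) (y : Fob F U) (g : spHom U W) : Fx y (dlt g) = @Fmor F _ _ g y.
Proof.
rewrite /Fx (bigD1 g) //= [X in _ + X]big1 ?addr0; last first.
  by move=> h nh; rewrite dlt_app (negbTE nh) scale0r.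
by rewrite dlt_app eqxx scale1r.
Qed.

Lemma Fx_add (U W : qspace) (y : Fob F U) (x x' : Alg U W) : Fx y (x + x') = Fx y x + Fx y x'.
Proof. by rewrite /Fx -big_split; apply: eq_bigr => g _; rewrite addfE scalerDl. Qed.

Lemma Fx0 (U W : qspace) (y : Fob F U) : Fx y (0 : Alg U W) = 0.
Proof. by rewrite /Fx big1 // => g _; rewrite ffunE scale0r. Qed.

Lemma Fx_aV (V W : qspace) (y : Fob F V) (x : Alg V W) :
  (forall W' (g : spHom V W'), ~~ stotal g -> @Fmor F _ _ g y = 0) -> Fx y (aV x) = Fx y x.
Proof.
move=> h; rewrite /Fx; apply: eq_bigr => g _; rewrite aV_char.
case tg: (stotal g); first by rewrite mul1r.
by rewrite h ?tg // !scaler0.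
Qed.

End Fun.

Theorem proposition4p32 (V : qspace) :
  conv (EV V) (EV V) = EV V /\
  (exists phi : forall W : qspace, Alg V W -> Alg V W,
     (forall W, {in QE W (EV V) &, forall x y, phi W (x + y) = phi W x + phi W y}) /\
     (forall W, {in QE W (EV V) &, injective (phi W)}) /\
     (forall W, [set phi W x | x in QE W (EV V)] = isoV V W) /\
     (forall W W' (g : spHom W W') (x : Alg V W), x \in QE W (EV V) ->
        phi W' (Qmap g x) = DQmap g (phi W x))) /\
  (forall F : spFunctor,
     exists Phi : (forall W : qspace, Alg V W -> Fob F W) -> Fob F V,
       (forall eta eta', is_nat_from_iso eta -> is_nat_from_iso eta' ->
          (Phi eta = Phi eta' <-> forall W, {in isoV V W, eta W =1 eta' W})) /\
       (forall eta, is_nat_from_iso eta -> Fimage (EV V) (Phi eta)) /\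
       (forall y, Fimage (EV V) y -> exists eta, is_nat_from_iso eta /\ Phi eta = y) /\
       (forall eta1 eta2 eta3,
          is_nat_from_iso eta1 -> is_nat_from_iso eta2 -> is_nat_from_iso eta3 ->
          (forall W, {in isoV V W, forall x, eta3 W x = eta1 W x + eta2 W x}) ->
          Phi eta3 = Phi eta1 + Phi eta2)).
Proof.
rewrite EV_EVd.
split; first exact: EV_idem.
split.
  exists (fun W => @aV V W); split.
    by move=> W x y _ _; exact: aV_add.
  split.
    move=> W x y /QEP[x' ->] /QEP[y' ->]; rewrite !aV_EV => e.
    by rewrite !conv_EV_decomp e.
  split.
    move=> W; apply/setP => y; apply/imsetP/isoVP.
      by case=> x _ ->; exists x.
    case=> x ->; exists (conv x (EVd V)); last by rewrite aV_EV.
    by apply/QEP; exists x.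
  by move=> W W' g x _; exact: aV_nat.
move=> F.
have iotaI : aV (dlt (idm V)) \in isoV V V by apply/isoVP; exists (dlt (idm V)).
have aVdlt : forall W (g : spHom V W), aV (dlt g) = DQmap g (aV (dlt (idm V))).
  by move=> W g; rewrite -aV_nat Qmap_dlt conv_dlt_dlt spcomp1.
have natdet : forall eta : (forall W : qspace, Alg V W -> Fob F W), is_nat_from_iso eta -> forall W (x : Alg V W),
    eta W (aV x) = @Fx F _ _ (eta V (aV (dlt (idm V)))) x.
  move=> eta [add nat] W x.
  have zI : (0 : Alg V W) \in isoV V W by apply/isoVP; exists 0; rewrite aV0.
  have eta0 : eta W 0 = 0.
    have h := add W 0 0 zI zI; rewrite addr0 in h.
    by apply: (addrI (eta W 0)); rewrite addr0 -h.
  rewrite {1}(alg_decomp' x) aV_sum /Fx.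
  suff : (\sum_g scal (x g) (aV (dlt g))) \in isoV V W /\
         eta W (\sum_g scal (x g) (aV (dlt g))) = \sum_g x g *: @Fmor F _ _ g (eta V (aV (dlt (idm V)))).
    by case.
  apply: (big_rec2 (fun a b => a \in isoV V W /\ eta W a = b)); first by split.
  move=> g a b _ [/isoVP[a' ->] <-].
  have sI : scal (x g) (aV (dlt g)) \in isoV V W.
    by apply/isoVP; exists (scal (x g) (dlt g)); rewrite aV_scal.
  split; first by rewrite -aV_scal -aV_add; apply/isoVP; eexists.
  rewrite add //; last by apply/isoVP; eexists.
  congr (_ + _); case: (F2_cases (x g)) => ->; first by rewrite scal0 eta0 scale0r.
  by rewrite scal1 scale1r aVdlt nat.
exists (fun eta : (forall W : qspace, Alg V W -> Fob F W) => eta V (aV (dlt (idm V)))).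
split.
  move=> eta eta' He He'; split.
    by move=> e W y /isoVP[x ->]; rewrite (natdet _ He) (natdet _ He') e.
  by move=> h; exact: h V _ iotaI.
split.
  move=> eta He; exists (eta V (aV (dlt (idm V)))).
  have -> : Fact (EVd V) (eta V (aV (dlt (idm V)))) = @Fx F _ _ (eta V (aV (dlt (idm V)))) (EVd V) by [].
  rewrite -(natdet _ He).
  have hE := aV_EV (dlt (idm V)); rewrite conv1l' in hE.
  by rewrite hE.
split.
  move=> _ [z ->].
  have -> : Fact (EVd V) z = @Fx F _ _ z (EVd V) by [].
  have kill : forall W' (g : spHom V W'), ~~ stotal g -> @Fmor F _ _ g (@Fx F _ _ z (EVd V)) = 0.
    by move=> W' g ng; rewrite -Fx_dlt -FxC EV_kill // Fx0.
  exists (fun W (phi : Alg V W) => @Fx F _ _ (@Fx F _ _ z (EVd V)) phi); split; first split.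
  - by move=> W a b _ _; exact: Fx_add.
  - move=> W W' g a /isoVP[x ->].
    by rewrite -aV_nat !Fx_aV // Qmap_dlt FxC Fx_dlt.
  - by rewrite /= Fx_aV // Fx_dlt Fmor_id.
by move=> e1 e2 e3 _ _ _ h; exact: h V _ iotaI.
Qed.
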